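(* Consider the equality problem (E) and algorithm PIR2, and suppose the algorithm terminates at iteration $k^*$ because $\Delta^{k^*}=\nabla^{k^*}$ (with $J^{k^*}\neq\emptyset$). Let $L$ be the set of indices fixed at their lower bounds during iterations $k<k^*$ (i.e. the union of $L^k$ over iterations with $\nabla^k>\Delta^k$) together with $L^{k^*}$, and $U$ the analogous set for upper bounds. Define $\rho_j:=\phi_j'(l_j)+\mu^{k^*}a_j$ for $j\in L$, $\rho_j:=0$ for $j\notin L$, $\lambda_j:=-\phi_j'(u_j)-\mu^{k^*}a_j$ for $j\in U$, and $\lambda_j:=0$ for $j\notin U$. Then $\rho_j\ge0$ and $\lambda_j\ge0$ for all $j\in J$.
   Context: Let $J=\{1,\dots,n\}$. Problem (E): minimize $\sum_{j\in J}\phi_j(x_j)$ subject to $\sum_{j\in J}a_jx_j=b$, $l_j\le x_j\le u_j$ ($j\in J$), where each $\phi_j:\mathbb{R}\to\mathbb{R}$ is strictly convex and continuously differentiable with $\phi_j'$ a bijection of $\mathbb{R}$ onto $\mathbb{R}$, $a_j>0$, $-\infty<l_j<u_j<\infty$, and (E) has an optimal solution. Algorithm PIR2 for (E): set $J^1:=J$, $b^1:=b$, $k:=1$. At iteration $k$, let $(\hat{\mathbf{x}}^k,\mu^k)$ be the unique pair with $\phi_j'(\hat x_j^k)+\mu^ka_j=0$ for $j\in J^k$ and $\sum_{j\in J^k}a_j\hat x^k_j=b^k$ (the solution and multiplier of the problem restricted to $J^k$ with right-hand side $b^k$ and no bound constraints). Let $L^k:=\{j\in J^k:\hat x^k_j\le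 l_j\}$, $U^k:=\{j\in J^k:\hat x^k_j\ge u_j\}$, $\nabla^k:=\sum_{j\in L^k}a_j(l_j-\hat x_j^k)$, $\Delta^k:=\sum_{j\in U^k}a_j(\hat x_j^k-u_j)$. If $\Delta^k=\nabla^k$, stop ($k^*:=k$) and set $x_j=l_j$ on $L^k$, $x_j=u_j$ on $U^k$, $x_j=\hat x_j^k$ on the rest of $J^k$. If $\nabla^k>\Delta^k$, fix $x_j:=l_j$ for $j\in L^k$, set $J^{k+1}:=J^k\setminus L^k$, $b^{k+1}:=b^k-\sum_{j\in L^k}a_jl_j$. If $\nabla^k<\Delta^k$, fix $x_j:=u_j$ for $j\in U^k$, set $J^{k+1}:=J^k\setminus U^k$, $b^{k+1}:=b^k-\sum_{j\in U^k}a_ju_j$. If $J^{k+1}=\emptyset$ stop; otherwise increase $k$ by one and repeat. *)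

(* Defs.v *)
From Stdlib Require Import Reals Lra List Arith Bool.
Open Scope R_scope.

Fixpoint rsum (n : nat) (f : nat -> R) : R :=
  match n with
  | O => 0
  | S m => rsum m f + f m
  end.

Definition Rleb (x y : R) : bool := if Rle_dec x y then true else false.
Definition Rltb (x y : R) : bool := if Rlt_dec x y then true else false.

(* Index set J = {0,...,n-1}; subsets of it are boolean predicates on nat. *)

Definition inL (Jk : nat -> bool) (xh l : nat -> R) (j : nat) : bool :=
  Jk j && Rleb (xh j) (l j).
Definition inU (Jk : nat -> bool) (xh u : nat -> R) (j : nat) : bool :=
  Jk j && Rleb (u j) (xh j).

Definition nablaF (n : nat) (a l : nat -> R) (Jk : nat -> bool) (xh : nat -> R) : R :=
  rsum n (fun j => if inL Jk xh l j then a j * (l j - xh j) else 0).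
Definition deltaF (n : nat) (a u : nat -> R) (Jk : nat -> bool) (xh : nat -> R) : R :=
  rsum n (fun j => if inU Jk xh u j then a j * (xh j - u j) else 0).

Definition feasibleE (n : nat) (a l u : nat -> R) (b : R) (x : nat -> R) : Prop :=
  rsum n (fun j => a j * x j) = b /\ (forall j, (j < n)%nat -> l j <= x j <= u j).
Definition optimalE (n : nat) (phi : nat -> R -> R) (a l u : nat -> R) (b : R)
    (x : nat -> R) : Prop :=
  feasibleE n a l u b x /\
  forall y, feasibleE n a l u b y ->
    rsum n (fun j => phi j (x j)) <= rsum n (fun j => phi j (y j)).

(* A run of algorithm PIR2 (iterations numbered 1..kstar) that stops at
   iteration kstar because Delta^kstar = nabla^kstar.
   Jk k  : the index set J^k,   bk k : right-hand side b^k,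
   xh k  : the unrestricted solution \hat x^k,  mu k : multiplier mu^k.
   dphi j is the derivative phi_j'. *)
Definition PIR2_run_stops_balanced (n : nat) (dphi : nat -> R -> R)
    (a l u : nat -> R) (b : R)
    (Jk : nat -> nat -> bool) (bk : nat -> R) (xh : nat -> nat -> R) (mu : nat -> R)
    (kstar : nat) : Prop :=
  (1 <= kstar)%nat /\
  (forall j, Jk 1%nat j = Nat.ltb j n) /\ bk 1%nat = b /\
  (* at each iteration, (xh k, mu k) solves the unbounded restricted problem *)
  (forall k, (1 <= k <= kstar)%nat ->
     (forall j, Jk k j = true -> dphi j (xh k j) + mu k * a j = 0) /\
     rsum n (fun j => if Jk k j then a j * xh k j else 0) = bk k) /\
  (forall k, (1 <= k < kstar)%nat ->
     let nab := nablaF n a l (Jk k) (xh k) in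
     let del := deltaF n a u (Jk k) (xh k) in
     del <> nab /\
     (nab > del ->
        (forall j, Jk (S k) j = Jk k j && negb (inL (Jk k) (xh k) l j)) /\
        bk (S k) = bk k - rsum n (fun j => if inL (Jk k) (xh k) l j then a j * l j else 0)) /\
     (nab < del ->
        (forall j, Jk (S k) j = Jk k j && negb (inU (Jk k) (xh k) u j)) /\
        bk (S k) = bk k - rsum n (fun j => if inU (Jk k) (xh k) u j then a j * u j else 0)) /\
     (exists j, Jk (S k) j = true)) /\
  deltaF n a u (Jk kstar) (xh kstar) = nablaF n a l (Jk kstar) (xh kstar) /\
  (exists j, Jk kstar j = true).

Definition finalL (n : nat) (a l u : nat -> R) (Jk : nat -> nat -> bool)
    (xh : nat -> nat -> R) (kstar : nat) (j : nat) : bool :=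
  existsb (fun k => Rltb (deltaF n a u (Jk k) (xh k)) (nablaF n a l (Jk k) (xh k))
                    && inL (Jk k) (xh k) l j)
          (seq 1 (kstar - 1))
  || inL (Jk kstar) (xh kstar) l j.
Definition finalU (n : nat) (a l u : nat -> R) (Jk : nat -> nat -> bool)
    (xh : nat -> nat -> R) (kstar : nat) (j : nat) : bool :=
  existsb (fun k => Rltb (nablaF n a l (Jk k) (xh k)) (deltaF n a u (Jk k) (xh k))
                    && inU (Jk k) (xh k) u j)
          (seq 1 (kstar - 1))
  || inU (Jk kstar) (xh kstar) u j.

Definition rhoF (n : nat) (dphi : nat -> R -> R) (a l u : nat -> R)
    (Jk : nat -> nat -> bool) (xh : nat -> nat -> R) (mu : nat -> R) (kstar j : nat) : R :=
  if finalL n a l u Jk xh kstar j then dphi j (l j) + mu kstar * a j else 0.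
Definition lambdaF (n : nat) (dphi : nat -> R -> R) (a l u : nat -> R)
    (Jk : nat -> nat -> bool) (xh : nat -> nat -> R) (mu : nat -> R) (kstar j : nat) : R :=
  if finalU n a l u Jk xh kstar j then - dphi j (u j) - mu kstar * a j else 0.

(* Main.v *)
Require Import Defs.
From Stdlib Require Import Reals Lra List Arith Bool Lia ClassicalEpsilon.
Open Scope R_scope.

Lemma rsum_ext n f g : (forall j, (j < n)%nat -> f j = g j) -> rsum n f = rsum n g.
Proof. induction n; simpl; intros H; auto. rewrite IHn by (intros; apply H; lia). rewrite H by lia. auto. Qed.
Lemma rsum_le n f g : (forall j, (j < n)%nat -> f j <= g j) -> rsum n f <= rsum n g.
Proof. induction n; simpl; intros H; [lra|]. specialize (IHn (fun j Hj => H j ltac:(lia))). specialize (H n ltac:(lia)). lra. Qed.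
Lemma rsum_plus n f g : rsum n (fun j => f j + g j) = rsum n f + rsum n g.
Proof. induction n; simpl; [lra|]. rewrite IHn; ring. Qed.
Lemma rsum_minus n f g : rsum n (fun j => f j - g j) = rsum n f - rsum n g.
Proof. induction n; simpl; [lra|]. rewrite IHn; ring. Qed.
Lemma Rleb_true x y : Rleb x y = true <-> x <= y.
Proof. unfold Rleb; destruct (Rle_dec x y); split; intros; auto; try discriminate; contradiction. Qed.
Lemma Rleb_false x y : Rleb x y = false -> y < x.
Proof. unfold Rleb; destruct (Rle_dec x y); intros; try discriminate; lra. Qed.
Lemma Rltb_true x y : Rltb x y = true <-> x < y.
Proof. unfold Rltb; destruct (Rlt_dec x y); split; intros; auto; try discriminate; contradiction. Qed.
Lemma tangent (f df : R -> R) x z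
  (Hd : derivable_pt_lim f x (df x))
  (Hc : forall x y t, x <> y -> 0 < t < 1 -> f (t*x+(1-t)*y) < t * f x + (1-t) * f y) :
  f x + df x * (z - x) <= f z.
Proof.
  destruct (Req_dec z x) as [->|Hne]; [lra|].
  apply Rnot_lt_le; intro Hlt.
  set (d := z - x).
  assert (Hd0 : Rabs d > 0) by (apply Rabs_pos_lt; unfold d; lra).
  set (eps := (f x + df x * d - f z) / Rabs d).
  assert (Heps : eps > 0) by (unfold eps; apply Rdiv_lt_0_compat; unfold d in *; lra).
  assert (Heps2 : eps * Rabs d = f x + df x * d - f z) by (unfold eps; field; lra).
  destruct (Hd eps Heps) as [del Hdel].
  set (t := Rmin (1/2) (del / (2 * Rabs d))).
  assert (Ht0 : 0 < t). { unfold t. apply Rmin_glb_lt; [lra|]. apply Rdiv_lt_0_compat; [apply cond_pos|lra]. }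
  assert (Ht1 : t <= 1/2) by apply Rmin_l.
  assert (Ht2 : t <= del / (2 * Rabs d)) by apply Rmin_r.
  assert (Ht3 : t * Rabs d < del).
  { apply Rle_lt_trans with (del / (2 * Rabs d) * Rabs d).
    apply Rmult_le_compat_r; lra.
    assert (del / (2 * Rabs d) * Rabs d = del / 2) by (field; lra).
    pose proof (cond_pos del); lra. }
  set (h := t * d).
  assert (Hh0 : h <> 0). { unfold h. apply Rmult_integral_contrapositive; split; unfold d; lra. }
  assert (Hh : Rabs h < del). { unfold h. rewrite Rabs_mult, (Rabs_right t) by lra. lra. }
  specialize (Hdel h Hh0 Hh).
  assert (Hconv : f (x + h) < t * f z + (1 - t) * f x).
  { replace (x + h) with (t * z + (1 - t) * x) by (unfold h, d; ring). apply Hc; lra. }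
  set (q := (f (x + h) - f x) / h) in *.
  assert (Hq : q * h = f (x + h) - f x) by (unfold q; field; auto).
  assert (Hqd : q * t * d < t * (f z - f x)). { replace (q * t * d) with (q * h) by (unfold h; ring). lra. }
  assert (Hqd2 : q * d < f z - f x).
  { apply (Rmult_lt_reg_l t); [lra|]. lra. }
  destruct (Rlt_or_le 0 d) as [Dp|Dn].
  - rewrite Rabs_right in Heps2 by lra.
    assert (q > df x - eps) by (apply Rabs_def2 in Hdel; lra).
    assert (q * d > (df x - eps) * d) by (apply Rmult_lt_compat_r; lra).
    lra.
  - assert (Dn' : d < 0) by (unfold d in *; lra).
    rewrite Rabs_left in Heps2 by lra.
    assert (q < df x + eps) by (apply Rabs_def2 in Hdel; lra).
    assert (q * d > (df x + eps) * d) by nra.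
    lra.
Qed.

Theorem proposition6
  (n : nat) (phi dphi : nat -> R -> R) (a l u : nat -> R) (b : R)
  (Hder : forall j, (j < n)%nat -> forall x, derivable_pt_lim (phi j) x (dphi j x))
  (Hcont : forall j, (j < n)%nat -> continuity (dphi j))
  (Hconv : forall j, (j < n)%nat -> forall x y t, x <> y -> 0 < t < 1 ->
             phi j (t * x + (1 - t) * y) < t * phi j x + (1 - t) * phi j y)
  (Hinj : forall j, (j < n)%nat -> forall x y, dphi j x = dphi j y -> x = y)
  (Hsurj : forall j, (j < n)%nat -> forall y, exists x, dphi j x = y)
  (Ha : forall j, (j < n)%nat -> 0 < a j)
  (Hlu : forall j, (j < n)%nat -> l j < u j)
  (Hopt : exists x, optimalE n phi a l u b x)
  (Jk : nat -> nat -> bool) (bk : nat -> R) (xh : nat -> nat -> R) (mu : nat -> R)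
  (kstar : nat)
  (Hrun : PIR2_run_stops_balanced n dphi a l u b Jk bk xh mu kstar) :
  forall j, (j < n)%nat ->
    0 <= rhoF n dphi a l u Jk xh mu kstar j /\
    0 <= lambdaF n dphi a l u Jk xh mu kstar j.
Proof.
  intros j Hj.
  destruct Hrun as (Hk1 & HJ1 & Hb1 & Hsol & Hstep & Hstop & Hne).
  assert (Dmono : forall i, (i < n)%nat -> forall x y, x <= y -> dphi i x <= dphi i y).
  { intros i Hi x y Hxy.
    pose proof (tangent (phi i) (dphi i) x y (Hder i Hi x) (Hconv i Hi)) as T1.
    pose proof (tangent (phi i) (dphi i) y x (Hder i Hi y) (Hconv i Hi)) as T2.
    destruct (Req_dec x y) as [->|Hne']; [lra|].
    assert (0 <= (dphi i y - dphi i x) * (y - x)) by lra.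
    apply Rnot_lt_le; intro Hc.
    assert ((dphi i y - dphi i x) * (y - x) < 0) by (apply Rmult_neg_pos; lra).
    lra. }
  assert (Dstrict : forall i, (i < n)%nat -> forall x y, x < y -> dphi i x < dphi i y).
  { intros i Hi x y Hxy. destruct (Dmono i Hi x y ltac:(lra)) as [H|H]; auto.
    apply Hinj in H; auto. lra. }
  set (X := fun i m => epsilon (inhabits 0) (fun x => dphi i x = - m * a i)).
  assert (XS : forall i m, (i < n)%nat -> dphi i (X i m) = - m * a i).
  { intros i m Hi. unfold X. apply epsilon_spec. apply Hsurj; auto. }
  assert (Xdec : forall i m1 m2, (i < n)%nat -> m1 <= m2 -> X i m2 <= X i m1).
  { intros i m1 m2 Hi Hm. apply Rnot_lt_le; intro Hc.
    apply (Dstrict i Hi) in Hc. rewrite !XS in Hc by auto.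
    pose proof (Ha i Hi). nra. }
  assert (Xxh : forall k i, (1 <= k <= kstar)%nat -> (i < n)%nat -> Jk k i = true ->
                X i (mu k) = xh k i).
  { intros k i Hk Hi HJ. apply (Hinj i Hi). rewrite XS by auto.
    destruct (Hsol k Hk) as [H1 _]. specialize (H1 i HJ). lra. }
  set (clip := fun i m => Rmax (l i) (Rmin (u i) (X i m))).
  set (T := fun k m => rsum n (fun i => if Jk k i then a i * clip i m else 0)).
  assert (Tmono : forall k m1 m2, m1 <= m2 -> T k m2 <= T k m1).
  { intros k m1 m2 Hm. unfold T. apply rsum_le. intros i Hi.
    destruct (Jk k i); [|lra].
    apply Rmult_le_compat_l; [pose proof (Ha i Hi); lra|].
    pose proof (Xdec i m1 m2 Hi Hm).
    unfold clip, Rmax, Rmin.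
    repeat destruct Rle_dec; lra. }
  assert (Tkey : forall k, (1 <= k <= kstar)%nat ->
     T k (mu k) = bk k + nablaF n a l (Jk k) (xh k) - deltaF n a u (Jk k) (xh k)).
  { intros k Hk. destruct (Hsol k Hk) as [_ H2]. rewrite <- H2.
    unfold nablaF, deltaF, T. rewrite <- rsum_plus, <- rsum_minus.
    apply rsum_ext. intros i Hi. unfold inL, inU.
    destruct (Jk k i) eqn:HJ; simpl; [|lra].
    unfold clip. rewrite (Xxh k i Hk Hi HJ). pose proof (Hlu i Hi).
    unfold Rmax, Rmin.
    destruct (Rleb (xh k i) (l i)) eqn:E1; destruct (Rleb (u i) (xh k i)) eqn:E2;
      try apply Rleb_true in E1; try apply Rleb_true in E2;
      try apply Rleb_false in E1; try apply Rleb_false in E2;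
      repeat destruct Rle_dec; try lra; try (replace (l i) with (xh k i) by lra; lra); try (replace (u i) with (xh k i) by lra; lra). }
  assert (TL : forall k m, (1 <= k < kstar)%nat ->
     nablaF n a l (Jk k) (xh k) > deltaF n a u (Jk k) (xh k) -> mu k <= m ->
     T k m = T (S k) m + rsum n (fun i => if inL (Jk k) (xh k) l i then a i * l i else 0)).
  { intros k m Hk Hgt Hm. pose proof (Hstep k Hk) as Hs. cbv zeta in Hs.
    destruct Hs as (_ & HL & _ & _). destruct (HL Hgt) as [HJS _].
    unfold T. rewrite <- rsum_plus. apply rsum_ext. intros i Hi.
    rewrite HJS. unfold inL.
    destruct (Jk k i) eqn:HJ; simpl; [|lra].
    destruct (Rleb (xh k i) (l i)) eqn:E1; simpl; [|lra].
    apply Rleb_true in E1.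
    pose proof (Xdec i (mu k) m Hi Hm). rewrite (Xxh k i ltac:(lia) Hi HJ) in H.
    pose proof (Hlu i Hi).
    unfold clip, Rmax, Rmin. repeat destruct Rle_dec; try lra; try (replace (X i m) with (l i) by lra; lra); try (replace (X i m) with (u i) by lra; lra). }
  assert (TU : forall k m, (1 <= k < kstar)%nat ->
     nablaF n a l (Jk k) (xh k) < deltaF n a u (Jk k) (xh k) -> m <= mu k ->
     T k m = T (S k) m + rsum n (fun i => if inU (Jk k) (xh k) u i then a i * u i else 0)).
  { intros k m Hk Hgt Hm. pose proof (Hstep k Hk) as Hs. cbv zeta in Hs.
    destruct Hs as (_ & _ & HU & _). destruct (HU Hgt) as [HJS _].
    unfold T. rewrite <- rsum_plus. apply rsum_ext. intros i Hi.
    rewrite HJS. unfold inU.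
    destruct (Jk k i) eqn:HJ; simpl; [|lra].
    destruct (Rleb (u i) (xh k i)) eqn:E1; simpl; [|lra].
    apply Rleb_true in E1.
    pose proof (Xdec i m (mu k) Hi Hm). rewrite (Xxh k i ltac:(lia) Hi HJ) in H.
    pose proof (Hlu i Hi).
    unfold clip, Rmax, Rmin. repeat destruct Rle_dec; try lra; try (replace (X i m) with (l i) by lra; lra); try (replace (X i m) with (u i) by lra; lra). }
  set (r := mu kstar).
  assert (Lstep : forall k, (1 <= k < kstar)%nat ->
     nablaF n a l (Jk k) (xh k) > deltaF n a u (Jk k) (xh k) ->
     T (S k) r = bk (S k) -> mu k <= r).
  { intros k Hk Hgt HT. apply Rnot_lt_le; intro Hc.
    pose proof (Hstep k Hk) as Hs. cbv zeta in Hs.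
    destruct Hs as (_ & HL & _ & _). destruct (HL Hgt) as [_ Hb].
    pose proof (Tkey k ltac:(lia)).
    pose proof (TL k (mu k) Hk Hgt (Rle_refl _)).
    pose proof (Tmono (S k) r (mu k) ltac:(lra)). lra. }
  assert (Ustep : forall k, (1 <= k < kstar)%nat ->
     nablaF n a l (Jk k) (xh k) < deltaF n a u (Jk k) (xh k) ->
     T (S k) r = bk (S k) -> r <= mu k).
  { intros k Hk Hgt HT. apply Rnot_lt_le; intro Hc.
    pose proof (Hstep k Hk) as Hs. cbv zeta in Hs.
    destruct Hs as (_ & _ & HU & _). destruct (HU Hgt) as [_ Hb].
    pose proof (Tkey k ltac:(lia)).
    pose proof (TU k (mu k) Hk Hgt (Rle_refl _)).
    pose proof (Tmono (S k) (mu k) r ltac:(lra)). lra. }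
  assert (Back : forall d k, (k + d = kstar)%nat -> (1 <= k)%nat -> T k r = bk k).
  { induction d as [|d IH]; intros k Hkd Hk.
    - replace k with kstar by lia. unfold r. rewrite Tkey by lia. lra.
    - assert (HTS : T (S k) r = bk (S k)) by (apply IH; lia).
      assert (Hk' : (1 <= k < kstar)%nat) by lia.
      pose proof (Hstep k Hk') as Hs. cbv zeta in Hs.
      destruct Hs as (Hneq & HL & HU & _).
      destruct (Rtotal_order (nablaF n a l (Jk k) (xh k)) (deltaF n a u (Jk k) (xh k)))
        as [Hlt|[Heq|Hgt]].
      + pose proof (Ustep k Hk' Hlt HTS). destruct (HU Hlt) as [_ Hb].
        rewrite (TU k r Hk' Hlt H). lra.
      + exfalso; apply Hneq; auto.
      + pose proof (Lstep k Hk' Hgt HTS). destruct (HL Hgt) as [_ Hb].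
        rewrite (TL k r Hk' Hgt H). lra. }
  assert (Bk : forall k, (1 <= k < kstar)%nat -> T (S k) r = bk (S k)).
  { intros k Hk. apply (Back (kstar - S k)%nat); lia. }
  pose proof (Ha j Hj) as Haj.
  split.
  - unfold rhoF, finalL.
    destruct (existsb _ _) eqn:E; simpl.
    + apply existsb_exists in E. destruct E as (k & Hin & Hk).
      apply in_seq in Hin. apply andb_true_iff in Hk. destruct Hk as [H1 H2].
      apply Rltb_true in H1. assert (Hk' : (1 <= k < kstar)%nat) by lia.
      pose proof (Lstep k Hk' H1 (Bk k Hk')).
      unfold inL in H2. apply andb_true_iff in H2. destruct H2 as [HJ H2].
      apply Rleb_true in H2.
      destruct (Hsol k ltac:(lia)) as [Hs _]. specialize (Hs j HJ).
      pose proof (Dmono j Hj _ _ H2). unfold r in *. nra.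
    + destruct (inL (Jk kstar) (xh kstar) l j) eqn:H2; [|lra].
      unfold inL in H2. apply andb_true_iff in H2. destruct H2 as [HJ H2].
      apply Rleb_true in H2.
      destruct (Hsol kstar ltac:(lia)) as [Hs _]. specialize (Hs j HJ).
      pose proof (Dmono j Hj _ _ H2). unfold r in *. nra.
  - unfold lambdaF, finalU.
    destruct (existsb _ _) eqn:E; simpl.
    + apply existsb_exists in E. destruct E as (k & Hin & Hk).
      apply in_seq in Hin. apply andb_true_iff in Hk. destruct Hk as [H1 H2].
      apply Rltb_true in H1. assert (Hk' : (1 <= k < kstar)%nat) by lia.
      pose proof (Ustep k Hk' H1 (Bk k Hk')).
      unfold inU in H2. apply andb_true_iff in H2. destruct H2 as [HJ H2].
      apply Rleb_true in H2.
      destruct (Hsol k ltac:(lia)) as [Hs _]. specialize (Hs j HJ).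
      pose proof (Dmono j Hj _ _ H2). unfold r in *. nra.
    + destruct (inU (Jk kstar) (xh kstar) u j) eqn:H2; [|lra].
      unfold inU in H2. apply andb_true_iff in H2. destruct H2 as [HJ H2].
      apply Rleb_true in H2.
      destruct (Hsol kstar ltac:(lia)) as [Hs _]. specialize (Hs j HJ).
      pose proof (Dmono j Hj _ _ H2). unfold r in *. nra.
Qed.
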